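(* Let $\gamma_a,\gamma_s>0$, $\lambda\ge0$, $q>0$, $\sigma_B>0$, $\varepsilon_a\in(0,2)$, and let $\beta_a,\beta_s:\mathbb R\to\mathbb R$ be globally Lipschitz continuous with $\beta_a\ge0$, $\beta_s>0$. Let $\mu\in(\varepsilon_a^{1/4},2^{1/4})$. Then there exists $M_0>0$ such that for every $M_a\ge M_0$ and every initial condition $(T_a^{(0)},T_s^{(0)})\in[0,M_a]\times[0,\mu M_a]$, the solution $(T_a,T_s)$ of \[ \begin{cases} \gamma_a T_a'=-\lambda(T_a-T_s)+\varepsilon_a\sigma_B|T_s|^3T_s-2\varepsilon_a\sigma_B|T_a|^3T_a+q\beta_a(T_a),\\ \gamma_s T_s'=-\lambda(T_s-T_a)-\sigma_B|T_s|^3T_s+\varepsilon_a\sigma_B|T_a|^3T_a+q\beta_s(T_s),\\ T_a(0)=T_a^{(0)},\quad T_s(0)=T_s^{(0)} \end{cases} \] does not leave the rectangle $[0,M_a]\times[0,\mu M_a]$ for positive times. *)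

(* Defs.v *)
From Stdlib Require Import Reals.
From Coquelicot Require Import Coquelicot.
Open Scope R_scope.

Definition glob_lipschitz (f : R -> R) : Prop :=
  exists L : R, forall x y : R, Rabs (f x - f y) <= L * Rabs (x - y).

Definition p4 (x : R) : R := Rabs x ^ 3 * x.

Definition rhs_a (lam q sB ea : R) (ba : R -> R) (Ta Ts : R) : R :=
  - lam * (Ta - Ts) + ea * sB * p4 Ts - 2 * ea * sB * p4 Ta + q * ba Ta.

Definition rhs_s (lam q sB ea : R) (bs : R -> R) (Ta Ts : R) : R :=
  - lam * (Ts - Ta) - sB * p4 Ts + ea * sB * p4 Ta + q * bs Ts.

Definition is_solution (ga gs lam q sB ea : R) (ba bs : R -> R)
    (T : R) (Ta Ts : R -> R) : Prop :=
  filterlim Ta (at_right 0) (locally (Ta 0)) /\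
  filterlim Ts (at_right 0) (locally (Ts 0)) /\
  (forall t, 0 < t < T ->
     is_derive Ta t (rhs_a lam q sB ea ba (Ta t) (Ts t) / ga) /\
     is_derive Ts t (rhs_s lam q sB ea bs (Ta t) (Ts t) / gs)).

(* Main.v *)
Require Import Defs.
From Stdlib Require Import Reals Lra Psatz Classical.
From Coquelicot Require Import Coquelicot.
Open Scope R_scope.

Lemma ball_R (x e y : R) : @ball R_UniformSpace x e y <-> Rabs (y - x) < e.
Proof. reflexivity. Qed.

Lemma rc_of_derive (f : R -> R) (x l : R) : is_derive f x l -> filterlim f (at_right x) (locally (f x)).
Proof.
  intros H. apply (filterlim_filter_le_1 (F := locally x) f).
  - apply filter_le_within.
  - apply (@ex_derive_continuous R_AbsRing R_NormedModule). exists l; exact H.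
Qed.

Lemma lc_of_derive (f : R -> R) (x l : R) : is_derive f x l -> filterlim f (at_left x) (locally (f x)).
Proof.
  intros H. apply (filterlim_filter_le_1 (F := locally x) f).
  - apply filter_le_within.
  - apply (@ex_derive_continuous R_AbsRing R_NormedModule). exists l; exact H.
Qed.

Lemma cont_of_derive (f : R -> R) (x l : R) : is_derive f x l -> continuity_pt f x.
Proof.
  intros H. apply continuity_pt_filterlim. apply (@ex_derive_continuous R_AbsRing R_NormedModule). exists l; exact H.
Qed.

Lemma lim_le_c' {T} (F : (T -> Prop) -> Prop) {FF : ProperFilter F} (f : T -> R) l c :
  filterlim f F (locally l) -> F (fun x => f x <= c) -> l <= c.
Proof.
  intros Hf Hc.
  assert (H := filterlim_le (F := F) f (fun _ => c) l c Hc Hf (filterlim_const c)).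
  exact H.
Qed.

Lemma lim_ge_c {T} (F : (T -> Prop) -> Prop) {FF : ProperFilter F} (f : T -> R) l c :
  filterlim f F (locally l) -> F (fun x => c <= f x) -> c <= l.
Proof.
  intros Hf Hc.
  assert (H := filterlim_le (F := F) (fun _ => c) f c l Hc (filterlim_const c) Hf).
  exact H.
Qed.

Lemma ev_right (h : R -> R) s L : filterlim h (at_right s) (locally L) ->
  forall P : R -> Prop, (exists e, 0 < e /\ forall z, Rabs (z - L) < e -> P z) ->
  exists d, 0 < d /\ forall y, s < y < s + d -> P (h y).
Proof.
  intros H P [e [He HP]].
  assert (Hl : locally L P) by (exists (mkposreal e He); intros z Hz; apply HP; exact Hz).
  destruct (H P Hl) as [d Hd].
  exists d; split; [apply cond_pos|].
  intros y Hy. apply Hd; [apply ball_R; rewrite Rabs_right; lra|lra].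
Qed.

Lemma lim_plus {T} {F : (T -> Prop) -> Prop} {FF : Filter F} (u v : T -> R) a b :
  filterlim u F (locally a) -> filterlim v F (locally b) ->
  filterlim (fun x => u x + v x) F (locally (a + b)).
Proof. intros Hu Hv. eapply filterlim_comp_2; eauto. apply (filterlim_plus a b). Qed.

Lemma lim_mult {T} {F : (T -> Prop) -> Prop} {FF : Filter F} (u v : T -> R) a b :
  filterlim u F (locally a) -> filterlim v F (locally b) ->
  filterlim (fun x => u x * v x) F (locally (a * b)).
Proof. intros Hu Hv. eapply filterlim_comp_2; eauto. apply (filterlim_mult a b). Qed.

Lemma lim_const' {T} {F : (T -> Prop) -> Prop} {FF : Filter F} (c : R) :
  filterlim (fun _ : T => c) F (locally c).
Proof. apply filterlim_const. Qed.

Lemma lim_app {T} {F : (T -> Prop) -> Prop} {FF : Filter F} (u : T -> R) (g : R -> R) a :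
  continuity_pt g a -> filterlim u F (locally a) ->
  filterlim (fun x => g (u x)) F (locally (g a)).
Proof.
  intros Hg Hu. eapply filterlim_comp; eauto. apply continuity_pt_filterlim; exact Hg.
Qed.

Lemma p4_lim {T} {F : (T -> Prop) -> Prop} {FF : Filter F} (u : T -> R) a :
  filterlim u F (locally a) -> filterlim (fun x => p4 (u x)) F (locally (p4 a)).
Proof.
  intros Hu. unfold p4.
  assert (Ha : filterlim (fun x => Rabs (u x)) F (locally (Rabs a))).
  { apply lim_app; auto. apply Rcontinuity_abs. }
  apply (filterlim_ext (fun x => (Rabs (u x) * (Rabs (u x) * (Rabs (u x) * 1))) * u x)).
  { intros x; simpl; ring. }
  replace (Rabs a ^ 3 * a) with ((Rabs a * (Rabs a * (Rabs a * 1))) * a) by (simpl; ring).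
  repeat first [exact Ha | exact Hu | apply lim_const' | apply lim_mult].
Qed.

Lemma lip_cont f : glob_lipschitz f -> forall x, continuity_pt f x.
Proof.
  intros [L HL] x. apply continuity_pt_filterlim.
  apply filterlim_locally. intros eps.
  assert (Hd : 0 < eps / (Rabs L + 1)).
  { apply Rdiv_lt_0_compat; [apply cond_pos | pose proof (Rabs_pos L); lra]. }
  exists (mkposreal _ Hd). intros y Hy.
  change (Rabs (y - x) < eps / (Rabs L + 1)) in Hy.
  change (Rabs (f y - f x) < eps).
  specialize (HL y x). pose proof (Rabs_pos L). pose proof (Rabs_pos (y - x)).
  pose proof (cond_pos eps).
  assert (L * Rabs (y - x) <= Rabs L * Rabs (y - x)) by (apply Rmult_le_compat_r; [lra| apply Rle_abs]).
  assert (H3 : Rabs (y-x) * (Rabs L+1) < eps/(Rabs L+1) * (Rabs L+1)) by (apply Rmult_lt_compat_r; lra).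
  replace (eps/(Rabs L+1)*(Rabs L+1)) with (pos eps) in H3 by (field; lra).
  nra.
Qed.

Lemma ev_left (h : R -> R) s L : filterlim h (at_left s) (locally L) ->
  forall P : R -> Prop, (exists e, 0 < e /\ forall z, Rabs (z - L) < e -> P z) ->
  exists d, 0 < d /\ forall y, s - d < y < s -> P (h y).
Proof.
  intros H P [e [He HP]].
  assert (Hl : locally L P) by (exists (mkposreal e He); intros z Hz; apply HP; exact Hz).
  destruct (H P Hl) as [d Hd].
  exists d; split; [apply cond_pos|].
  intros y Hy. apply Hd; [change (Rabs (y - s) < d); rewrite Rabs_left; lra|lra].
Qed.

Lemma eventually_right_le (f : R -> R) a c d : 0 < d ->
  (forall y, a < y < a + d -> f y <= c) -> at_right a (fun y => f y <= c).
Proof.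
  intros Hd H. exists (mkposreal d Hd). intros y Hy Hay.
  change (Rabs (y - a) < d) in Hy. apply H. rewrite Rabs_right in Hy; lra.
Qed.

Lemma eventually_left_le (f : R -> R) a c d : 0 < d ->
  (forall y, a - d < y < a -> f y <= c) -> at_left a (fun y => f y <= c).
Proof.
  intros Hd H. exists (mkposreal d Hd). intros y Hy Hay.
  change (Rabs (y - a) < d) in Hy. apply H. rewrite Rabs_left in Hy; lra.
Qed.

Lemma eventually_left_ge (f : R -> R) a c d : 0 < d ->
  (forall y, a - d < y < a -> c <= f y) -> at_left a (fun y => c <= f y).
Proof.
  intros Hd H. exists (mkposreal d Hd). intros y Hy Hay.
  change (Rabs (y - a) < d) in Hy. apply H. rewrite Rabs_left in Hy; lra.
Qed.

Lemma mono (f df : R -> R) a b : a < b -> filterlim f (at_right a) (locally (f a)) ->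
  (forall w, a < w <= b -> is_derive f w (df w)) ->
  (forall w, a < w <= b -> 0 <= df w) -> f a <= f b.
Proof.
  intros Hab Hr Hd Hp.
  assert (Hk : forall a', a < a' < b -> f a' <= f b).
  { intros a' Ha'.
    assert (E1 : Rmin a' b = a') by (apply Rmin_left; lra).
    assert (E2 : Rmax a' b = b) by (apply Rmax_right; lra).
    destruct (MVT_gen f a' b df) as [c [Hc E]]; cbv zeta in *; rewrite ?E1, ?E2 in *.
    - intros x Hx. apply Hd; lra.
    - intros x Hx. apply continuity_pt_filterlim.
      apply (@ex_derive_continuous R_AbsRing R_NormedModule). exists (df x). apply Hd; lra.
    - assert (0 <= df c) by (apply Hp; lra). nra. }
  apply (lim_le_c' (at_right a) f (f a) (f b) Hr).
  apply (eventually_right_le f a (f b) (b - a)); [lra|]. intros y Hy; apply Hk; lra.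
Qed.

Lemma real_ind (P : R -> Prop) a b : a <= b -> P a ->
  (forall s, a <= s < b -> (forall u, a <= u <= s -> P u) ->
     exists d, 0 < d /\ forall u, s < u < s + d -> P u) ->
  (forall s, a < s <= b -> (forall u, a <= u < s -> P u) -> P s) ->
  forall u, a <= u <= b -> P u.
Proof.
  intros Hab Ha Hstep Hclos.
  set (E := fun x => a <= x <= b /\ forall u, a <= u <= x -> P u).
  destruct (completeness E) as [c [Hub Hl]].
  - exists b; intros x [Hx _]; lra.
  - exists a. split; [lra|]. intros u Hu; replace u with a by lra; auto.
  assert (Ea : E a) by (split; [lra|]; intros u Hu; replace u with a by lra; auto).
  assert (Hac : a <= c) by (apply Hub; exact Ea).
  assert (Hcb : c <= b) by (apply Hl; intros x [Hx _]; lra).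
  assert (Hbelow : forall u, a <= u < c -> P u).
  { intros u Hu.
    destruct (classic (exists x, E x /\ u <= x)) as [[x [[_ Hx] Hux]]|Hn].
    - apply Hx; lra.
    - exfalso. assert (c <= u); [|lra]. apply Hl. intros x Ex.
      destruct (Rle_lt_dec x u); auto. exfalso; apply Hn; exists x; split; auto; lra. }
  assert (Pc : P c).
  { destruct (Req_dec c a) as [->|Hne]; auto. apply Hclos; [lra|auto]. }
  assert (Ec : E c).
  { split; [lra|]. intros u Hu. destruct (Req_dec u c) as [->|]; auto. apply Hbelow; lra. }
  destruct (Req_dec c b) as [Hcb'|Hcb'].
  - intros u Hu. apply Ec. lra.
  - exfalso. destruct (Hstep c) as [d [Hd Hs]]; [lra| apply Ec|].
    set (x := Rmin (c + d/2) b).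
    assert (Hx1 : x <= c + d/2) by apply Rmin_l.
    assert (Hx2 : x <= b) by apply Rmin_r.
    assert (Hx3 : c < x) by (unfold x; apply Rmin_glb_lt; lra).
    assert (Ex : E x).
    { split; [lra|]. intros u Hu. destruct (Rle_lt_dec u c).
      - apply Ec; lra.
      - apply Hs; lra. }
    assert (x <= c) by (apply Hub; exact Ex). lra.
Qed.

Lemma barrier (f df : R -> R) a b : a < b -> filterlim f (at_right a) (locally (f a)) ->
  (forall w, a < w <= b -> is_derive f w (df w)) -> 0 <= f a ->
  (forall w, a < w <= b -> f w < 0 -> 0 <= df w) -> 0 <= f b.
Proof.
  intros Hab Hr Hd Ha Hs.
  destruct (Rle_lt_dec 0 (f b)) as [|Hneg]; auto. exfalso.
  assert (H : forall x, -b <= x <= -a -> f (-x) <= f b).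
  { apply (real_ind (fun x => f (-x) <= f b)).
    - lra.
    - rewrite Ropp_involutive; lra.
    - intros s Hs1 Hall. assert (Ps := Hall s ltac:(lra)). cbv beta in Ps.
      set (p := -s) in *. assert (Ep : p = -s) by reflexivity.
      assert (Hp : a < p <= b) by (unfold p; lra).
      destruct (ev_left f p (f p) (lc_of_derive f p (df p) (Hd p Hp)) (fun z => z < 0))
        as [d [Hd0 Hev]].
      { exists (- f p). split; [lra|]. intros z Hz. apply Rabs_lt_between' in Hz. lra. }
      exists (Rmin d (p - a)). split; [apply Rmin_glb_lt; lra|].
      intros u Hu. pose proof (Rmin_l d (p - a)). pose proof (Rmin_r d (p - a)).
      apply Rle_trans with (f p); [|exact Ps].
      apply (mono f df); [lra | |intros w Hw; apply Hd; lra|].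
      + apply (rc_of_derive f (-u) (df (-u))). apply Hd; lra.
      + intros w Hw. apply Hs; [lra|].
        destruct (Req_dec w p) as [->|]; [lra|]. apply Hev; lra.
    - intros s Hs1 Hall.
      set (p := -s). assert (Ep : p = -s) by reflexivity.
      assert (Hp : a <= p < b) by (unfold p; lra).
      assert (Hrp : filterlim f (at_right p) (locally (f p))).
      { destruct (Req_dec p a) as [->|]; auto. apply (rc_of_derive f p (df p)). apply Hd; lra. }
      apply (lim_le_c' (at_right p) f (f p) (f b) Hrp).
      apply (eventually_right_le f p (f b) (b - p)); [lra|].
      intros y Hy. replace y with (- (- y)) by ring. apply Hall. unfold p in *; lra. }
  specialize (H (-a) ltac:(lra)). rewrite Ropp_involutive in H. lra.
Qed.

Lemma lim_opp {T} {F : (T -> Prop) -> Prop} {FF : Filter F} (u : T -> R) a :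
  filterlim u F (locally a) -> filterlim (fun x => - u x) F (locally (- a)).
Proof.
  intros Hu. apply (filterlim_ext (fun x => (-1) * u x)); [intros; ring|].
  replace (- a) with ((-1) * a) by ring. apply lim_mult; auto. apply lim_const'.
Qed.

Lemma lim_minus {T} {F : (T -> Prop) -> Prop} {FF : Filter F} (u v : T -> R) a b :
  filterlim u F (locally a) -> filterlim v F (locally b) ->
  filterlim (fun x => u x - v x) F (locally (a - b)).
Proof. intros Hu Hv. apply lim_plus; auto. apply lim_opp; auto. Qed.

Lemma mono_dec (f df : R -> R) a b : a < b -> filterlim f (at_right a) (locally (f a)) ->
  (forall w, a < w <= b -> is_derive f w (df w)) ->
  (forall w, a < w <= b -> df w <= 0) -> f b <= f a.
Proof.
  intros Hab Hr Hd Hp.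
  assert (H := mono (fun x => - f x) (fun x => - df x) a b Hab (lim_opp f (f a) Hr)).
  cbv beta in H. enough (- f a <= - f b) by lra. apply H.
  - intros w Hw. exact (@is_derive_opp R_AbsRing R_NormedModule f w (df w) (Hd w Hw)).
  - intros w Hw. specialize (Hp w Hw). lra.
Qed.

Lemma barrier_up (f df : R -> R) a b c : a < b -> filterlim f (at_right a) (locally (f a)) ->
  (forall w, a < w <= b -> is_derive f w (df w)) -> f a <= c ->
  (forall w, a < w <= b -> c < f w -> df w <= 0) -> f b <= c.
Proof.
  intros Hab Hr Hd Ha Hs.
  assert (Hr' : filterlim (fun x => c - f x) (at_right a) (locally (c - f a))).
  { apply lim_minus; auto. apply lim_const'. }
  assert (H := barrier (fun x => c - f x) (fun x => - df x) a b Hab Hr').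
  cbv beta in H. enough (0 <= c - f b) by lra. apply H.
  - intros w Hw. replace (- df w) with (0 - df w) by ring.
    exact (@is_derive_minus R_AbsRing R_NormedModule (fun _ => c) f w 0 (df w)
             (@is_derive_const R_AbsRing R_NormedModule c w) (Hd w Hw)).
  - lra.
  - intros w Hw Hlt. specialize (Hs w Hw ltac:(lra)). lra.
Qed.

Lemma p4_nonneg x : 0 <= x -> p4 x = x ^ 4.
Proof. intros H. unfold p4. rewrite Rabs_right by lra. ring. Qed.

Lemma p4_le y z : y <= z -> 0 <= z -> p4 y <= z ^ 4.
Proof.
  intros H1 H2. destruct (Rle_lt_dec y 0).
  - unfold p4. pose proof (Rabs_pos y). assert (0 <= Rabs y ^ 3) by (apply pow_le; lra).
    assert (0 <= z ^ 4) by (apply pow_le; lra). nra.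
  - rewrite p4_nonneg by lra. apply pow_incr; lra.
Qed.

Lemma p4_nonpos y : y <= 0 -> p4 y <= 0.
Proof.
  intros H. unfold p4. pose proof (Rabs_pos y). assert (0 <= Rabs y ^ 3) by (apply pow_le; lra). nra.
Qed.

Lemma p4_ge0 y : 0 <= y -> 0 <= p4 y.
Proof. intros H. rewrite p4_nonneg by lra. apply pow_le; lra. Qed.

Lemma poly_bound c A B z : 0 < c -> 0 <= A -> 0 <= B -> 1 <= z -> A + B + 1 <= c * z ->
  A * z + B < c * z ^ 4.
Proof.
  intros Hc HA HB Hz H.
  assert (Hz3 : 1 <= z ^ 3).
  { replace 1 with (1 ^ 3) by ring. apply pow_incr; lra. }
  replace (c * z ^ 4) with ((c * z) * z ^ 3) by ring.
  assert ((A + B + 1) * 1 <= (c * z) * z ^ 3) by (apply Rmult_le_compat; lra).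
  assert (A * z <= A * z ^ 3).
  { apply Rmult_le_compat_l; auto. replace (z ^ 3) with (z * (z * z)) by ring. nra. }
  nra.
Qed.

Lemma pow4_lt x y : 0 <= x < y -> x ^ 4 < y ^ 4.
Proof. intros H. assert (0 < y) by lra. assert (x*x <= y*y) by nra. assert (x*x*x <= y*y*y) by nra. assert (0 < y*y*y) by (apply Rmult_lt_0_compat; [nra|lra]). assert (x*x*x*x <= y*y*y*x) by nra. assert (y*y*y*x < y*y*y*y) by nra. simpl. nra. Qed.

Ltac limtac Hu Hv Hc :=
  repeat first [ exact Hu | exact Hv | apply lim_const' | apply lim_minus | apply lim_plus
               | apply p4_lim | apply lim_mult | apply (lim_app _ _ _ (Hc _)) ].

Lemma rhs_a_lim {T} {F : (T -> Prop) -> Prop} {FF : Filter F} lam q sB ea ba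
  (Hc : forall x, continuity_pt ba x) (u v : T -> R) a b :
  filterlim u F (locally a) -> filterlim v F (locally b) ->
  filterlim (fun w => rhs_a lam q sB ea ba (u w) (v w)) F (locally (rhs_a lam q sB ea ba a b)).
Proof. intros Hu Hv. unfold rhs_a. limtac Hu Hv Hc. Qed.

Lemma rhs_s_lim {T} {F : (T -> Prop) -> Prop} {FF : Filter F} lam q sB ea bs
  (Hc : forall x, continuity_pt bs x) (u v : T -> R) a b :
  filterlim u F (locally a) -> filterlim v F (locally b) ->
  filterlim (fun w => rhs_s lam q sB ea bs (u w) (v w)) F (locally (rhs_s lam q sB ea bs a b)).
Proof. intros Hu Hv. unfold rhs_s. limtac Hu Hv Hc. Qed.

Lemma p4_scale mu x : 0 < mu -> p4 (mu * x) = mu ^ 4 * p4 x.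
Proof. intros H. unfold p4. rewrite Rabs_mult, (Rabs_right mu) by lra. ring. Qed.

Lemma rpow4 x : 0 < x -> Rpower x (1/4) ^ 4 = x.
Proof.
  intros H. assert (0 < Rpower x (1/4)) by (unfold Rpower; apply exp_pos).
  rewrite <- Rpower_pow by assumption. rewrite Rpower_mult.
  replace (1/4 * INR 4) with 1 by (simpl; field). apply Rpower_1; lra.
Qed.

Lemma lip_bound f : glob_lipschitz f -> exists L', 0 <= L' /\ forall x, f x <= f 0 + L' * Rabs x.
Proof.
  intros [L HL]. exists (Rabs L). split; [apply Rabs_pos|]. intros x.
  specialize (HL x 0). rewrite Rminus_0_r in HL. pose proof (Rle_abs (f x - f 0)).
  pose proof (Rabs_pos x).
  assert (L * Rabs x <= Rabs L * Rabs x) by (apply Rmult_le_compat_r; [auto| apply Rle_abs]). lra.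
Qed.

Theorem lemma4p2 (ga gs lam q sB ea mu : R) (ba bs : R -> R) :
  0 < ga -> 0 < gs -> 0 <= lam -> 0 < q -> 0 < sB -> 0 < ea < 2 ->
  glob_lipschitz ba -> glob_lipschitz bs ->
  (forall x, 0 <= ba x) -> (forall x, 0 < bs x) ->
  Rpower ea (1/4) < mu < Rpower 2 (1/4) ->
  exists M0 : R, 0 < M0 /\
    forall Ma : R, M0 <= Ma ->
    forall (Ta Ts : R -> R) (T : R), 0 < T ->
      0 <= Ta 0 <= Ma -> 0 <= Ts 0 <= mu * Ma ->
      is_solution ga gs lam q sB ea ba bs T Ta Ts ->
      forall t, 0 <= t < T -> 0 <= Ta t <= Ma /\ 0 <= Ts t <= mu * Ma.
Proof.
  intros Hga Hgs Hlam Hq HsB Hea Hbal Hbsl Hba Hbs Hmu.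
  assert (Hr0 : 0 < Rpower ea (1/4)) by (unfold Rpower; apply exp_pos).
  assert (Hmu0 : 0 < mu) by lra.
  assert (Hm1 : ea < mu ^ 4) by (rewrite <- (rpow4 ea) by lra; apply pow4_lt; lra).
  assert (Hm2 : mu ^ 4 < 2) by (rewrite <- (rpow4 2) by lra; apply pow4_lt; lra).
  destruct (lip_bound ba Hbal) as [La' [HLa Hba_b]].
  destruct (lip_bound bs Hbsl) as [Ls' [HLs Hbs_b]].
  assert (Hba0 := Hba 0). assert (Hbs0 := Hbs 0).
  set (ca := ea * sB * (2 - mu^4)). set (Aa := lam*mu + q*La'). set (Ba := q * ba 0).
  set (Ka := (Aa + Ba + 1)/ca).
  set (cb := sB * (mu^4 - ea)). set (Ab := mu^3*lam + mu^4*q*Ls'). set (Bb := mu^4*q*bs 0).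
  set (Kb := (Ab+Bb+1)/cb).
  assert (Hmu3 : 0 < mu ^ 3) by (apply pow_lt; lra).
  assert (Hmu4 : 0 < mu ^ 4) by (apply pow_lt; lra).
  assert (Hca : 0 < ca) by (unfold ca; apply Rmult_lt_0_compat; [nra|lra]).
  assert (Hcb : 0 < cb) by (unfold cb; apply Rmult_lt_0_compat; lra).
  assert (HAa : 0 <= Aa) by (unfold Aa; nra).
  assert (HBa : 0 <= Ba) by (unfold Ba; nra).
  assert (HAb : 0 <= Ab) by (unfold Ab; assert (0 <= mu^4 * q) by nra; nra).
  assert (HBb : 0 <= Bb) by (unfold Bb; assert (0 <= mu^4 * q) by nra; nra).
  assert (HKa : ca * Ka = Aa + Ba + 1) by (unfold Ka; field; lra).
  assert (HKb : cb * Kb = Ab + Bb + 1) by (unfold Kb; field; lra).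
  assert (HKa0 : 0 < Ka) by (unfold Ka; apply Rdiv_lt_0_compat; lra).
  assert (HKb0 : 0 < Kb) by (unfold Kb; apply Rdiv_lt_0_compat; lra).
  exists (Rmax (1 + Ka) ((1 + Kb)/mu)).
  split. { apply Rlt_le_trans with (1+Ka); [lra| apply Rmax_l]. }
  intros Ma HM.
  assert (HMa : 1 + Ka <= Ma) by (eapply Rle_trans; [apply Rmax_l| exact HM]).
  assert (HMb : 1 + Kb <= mu * Ma).
  { assert (H : (1+Kb)/mu <= Ma) by (eapply Rle_trans; [apply Rmax_r|exact HM]).
    apply Rmult_le_compat_l with (r := mu) in H; [|lra].
    replace (mu * ((1+Kb)/mu)) with (1+Kb) in H by (field; lra). lra. }
  assert (CA : forall x y, Ma <= x -> y <= mu * Ma -> rhs_a lam q sB ea ba x y < 0).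
  { intros x y Hx Hy. unfold rhs_a.
    assert (Hx1 : 1 <= x) by lra.
    assert (Hyx : y <= mu * x) by nra.
    assert (P1 : p4 y <= (mu * x)^4) by (apply p4_le; nra).
    rewrite Rpow_mult_distr in P1.
    rewrite (p4_nonneg x) by lra.
    assert (P2 : ea * sB * p4 y <= ea*sB*(mu^4 * x^4)) by (apply Rmult_le_compat_l; [nra|exact P1]).
    assert (P3 : q * ba x <= q * (ba 0 + La' * x)).
    { apply Rmult_le_compat_l; [lra|]. rewrite <- (Rabs_right x) at 2 by lra. apply Hba_b. }
    assert (P4 : lam * y <= lam * (mu * x)) by (apply Rmult_le_compat_l; lra).
    assert (P5 : 0 <= lam * x) by nra.
    assert (PB : Aa * x + Ba < ca * x ^ 4).
    { apply poly_bound; try lra.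
      assert (ca * Ka <= ca * x) by (apply Rmult_le_compat_l; lra). lra. }
    unfold Aa, Ba, ca in PB. lra. }
  assert (CB : forall x y, x <= Ma -> mu * Ma <= y -> rhs_s lam q sB ea bs x y < 0).
  { intros x y Hx Hy.
    assert (Hy1 : 1 <= y) by lra.
    assert (Hxy : mu * x <= y) by nra.
    assert (P1 : p4 (mu * x) <= y ^ 4) by (apply p4_le; lra).
    rewrite p4_scale in P1 by lra.
    assert (P3 : q * bs y <= q * (bs 0 + Ls' * y)).
    { apply Rmult_le_compat_l; [lra|]. rewrite <- (Rabs_right y) at 2 by lra. apply Hbs_b. }
    assert (P4 : mu ^ 3 * lam * (mu * x) <= mu ^ 3 * lam * y)
      by (apply Rmult_le_compat_l; [nra|lra]).
    assert (P5 : 0 <= mu ^ 4 * lam * y) by (assert (0 <= mu^4*lam) by nra; nra).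
    assert (PB : Ab * y + Bb < cb * y ^ 4).
    { apply poly_bound; try lra.
      assert (cb * Kb <= cb * y) by (apply Rmult_le_compat_l; lra). lra. }
    assert (Q : mu ^ 4 * rhs_s lam q sB ea bs x y < 0).
    { unfold rhs_s. rewrite (p4_nonneg y) by lra. unfold Ab, Bb, cb in PB.
      assert (P2 : ea * sB * (mu ^ 4 * p4 x) <= ea * sB * y ^ 4)
        by (apply Rmult_le_compat_l; [nra|exact P1]).
      assert (P6 : mu ^ 4 * (q * bs y) <= mu ^ 4 * (q * (bs 0 + Ls' * y)))
        by (apply Rmult_le_compat_l; lra).
      lra. }
    nra. }
  assert (CC : forall x y, 0 <= x -> y <= 0 -> 0 < rhs_s lam q sB ea bs x y).
  { intros x y Hx Hy. unfold rhs_s.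
    assert (H1 : 0 <= - lam * (y - x)) by nra.
    assert (H2 : 0 <= - sB * p4 y) by (pose proof (p4_nonpos y Hy); nra).
    assert (H3 : 0 <= ea * sB * p4 x) by (pose proof (p4_ge0 x Hx); assert (0 < ea * sB) by nra; nra).
    assert (H4 : 0 < q * bs y) by (pose proof (Hbs y); nra).
    lra. }
  assert (CD : forall x y, x <= 0 -> 0 <= y -> 0 <= rhs_a lam q sB ea ba x y).
  { intros x y Hx Hy. unfold rhs_a.
    assert (H1 : 0 <= - lam * (x - y)) by nra.
    assert (H2 : 0 <= - (2 * ea * sB) * p4 x) by (pose proof (p4_nonpos x Hx); assert (0 < 2 * ea * sB) by nra; nra).
    assert (H3 : 0 <= ea * sB * p4 y) by (pose proof (p4_ge0 y Hy); assert (0 < ea * sB) by nra; nra).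
    assert (H4 : 0 <= q * ba x) by (pose proof (Hba x); nra).
    lra. }
  intros Ta Ts T HT HTa0 HTs0 [Hr1 [Hr2 Hd]] t Ht.
  set (P := fun u => 0 <= Ta u <= Ma /\ 0 <= Ts u <= mu * Ma).
  assert (Hrc : forall s, 0 <= s < T ->
     filterlim Ta (at_right s) (locally (Ta s)) /\ filterlim Ts (at_right s) (locally (Ts s))).
  { intros s Hs. destruct (Req_dec s 0) as [->|Hne]; [split; auto|].
    destruct (Hd s ltac:(lra)) as [DA DS].
    split; [exact (rc_of_derive _ _ _ DA) | exact (rc_of_derive _ _ _ DS)]. }
  change (P t). apply (real_ind P 0 t); try lra.
  - unfold P; auto.
  - intros s Hs Hall. destruct (Hall s ltac:(lra)) as [[HA1 HA2] [HS1 HS2]].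
    destruct (Hrc s ltac:(lra)) as [RTa RTs].
    assert (RFs := rhs_s_lim lam q sB ea bs (lip_cont bs Hbsl) Ta Ts (Ta s) (Ts s) RTa RTs).
    assert (D1 : exists d, 0 < d /\ forall u, s < u < s + d -> u < T -> 0 <= Ts u).
    { destruct (Rle_lt_or_eq_dec 0 (Ts s) HS1) as [Hpos|Heq].
      - destruct (ev_right Ts s (Ts s) RTs (fun z => 0 <= z)) as [d [Hd0 Hev]].
        { exists (Ts s). split; auto. intros z Hz. apply Rabs_lt_between' in Hz. lra. }
        exists d. split; [exact Hd0|]. intros u Hu _. apply Hev; lra.
      - assert (Hpos : 0 < rhs_s lam q sB ea bs (Ta s) (Ts s)) by (apply CC; lra).
        destruct (ev_right _ s _ RFs (fun z => 0 < z)) as [d [Hd0 Hev]].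
        { exists (rhs_s lam q sB ea bs (Ta s) (Ts s)). split; auto.
          intros z Hz. apply Rabs_lt_between' in Hz. lra. }
        exists d. split; [exact Hd0|]. intros u Hu HuT. apply Rle_trans with (Ts s); [lra|].
        apply (mono Ts (fun w => rhs_s lam q sB ea bs (Ta w) (Ts w) / gs) s u); [lra|exact RTs| |].
        + intros w Hw. apply (Hd w ltac:(lra)).
        + intros w Hw. specialize (Hev w ltac:(lra)). cbv beta in Hev.
          apply Rlt_le, Rdiv_lt_0_compat; lra. }
    assert (D2 : exists d, 0 < d /\ forall u, s < u < s + d -> u < T -> Ts u <= mu * Ma).
    { destruct (Rle_lt_or_eq_dec (Ts s) (mu * Ma) HS2) as [Hlt|Heq].
      - destruct (ev_right Ts s (Ts s) RTs (fun z => z <= mu * Ma)) as [d [Hd0 Hev]].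
        { exists (mu * Ma - Ts s). split; [lra|]. intros z Hz. apply Rabs_lt_between' in Hz. lra. }
        exists d. split; [exact Hd0|]. intros u Hu _. apply Hev; lra.
      - assert (Hneg : rhs_s lam q sB ea bs (Ta s) (Ts s) < 0) by (apply CB; lra).
        destruct (ev_right _ s _ RFs (fun z => z < 0)) as [d [Hd0 Hev]].
        { exists (- rhs_s lam q sB ea bs (Ta s) (Ts s)). split; [lra|].
          intros z Hz. apply Rabs_lt_between' in Hz. lra. }
        exists d. split; [exact Hd0|]. intros u Hu HuT. apply Rle_trans with (Ts s); [|lra].
        apply (mono_dec Ts (fun w => rhs_s lam q sB ea bs (Ta w) (Ts w) / gs) s u); [lra|exact RTs| |].
        + intros w Hw. apply (Hd w ltac:(lra)).
        + intros w Hw. specialize (Hev w ltac:(lra)). cbv beta in Hev.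
          unfold Rdiv. assert (0 < / gs) by (apply Rinv_0_lt_compat; lra). nra. }
    destruct D1 as [d1 [Hd1 D1]]. destruct D2 as [d2 [Hd2 D2]].
    exists (Rmin d1 (Rmin d2 (T - s))). split.
    { apply Rmin_glb_lt; [lra| apply Rmin_glb_lt; lra]. }
    intros u Hu.
    pose proof (Rmin_l d1 (Rmin d2 (T - s))). pose proof (Rmin_r d1 (Rmin d2 (T - s))).
    pose proof (Rmin_l d2 (T - s)). pose proof (Rmin_r d2 (T - s)).
    assert (Hinv : 0 < / ga) by (apply Rinv_0_lt_compat; lra).
    split; split.
    + apply (barrier Ta (fun w => rhs_a lam q sB ea ba (Ta w) (Ts w) / ga) s u); [lra|exact RTa| | lra |].
      * intros w Hw. apply (Hd w ltac:(lra)).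
      * intros w Hw Hneg. cbv beta. unfold Rdiv.
        assert (0 <= rhs_a lam q sB ea ba (Ta w) (Ts w)) by (apply CD; [lra| apply D1; lra]).
        nra.
    + apply (barrier_up Ta (fun w => rhs_a lam q sB ea ba (Ta w) (Ts w) / ga) s u Ma); [lra|exact RTa| | lra |].
      * intros w Hw. apply (Hd w ltac:(lra)).
      * intros w Hw Hgt. cbv beta. unfold Rdiv.
        assert (rhs_a lam q sB ea ba (Ta w) (Ts w) < 0) by (apply CA; [lra| apply D2; lra]).
        nra.
    + apply D1; lra.
    + apply D2; lra.
  - intros s Hs Hall. assert (Hs' : 0 < s < T) by lra.
    destruct (Hd s Hs') as [DA DS].
    assert (LA := lc_of_derive _ _ _ DA). assert (LS := lc_of_derive _ _ _ DS).
    split; split.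
    + apply (lim_ge_c (at_left s) Ta (Ta s) 0 LA). apply (eventually_left_ge Ta s 0 s); [lra|].
      intros y Hy. destruct (Hall y ltac:(lra)); tauto.
    + apply (lim_le_c' (at_left s) Ta (Ta s) Ma LA). apply (eventually_left_le Ta s Ma s); [lra|].
      intros y Hy. destruct (Hall y ltac:(lra)); tauto.
    + apply (lim_ge_c (at_left s) Ts (Ts s) 0 LS). apply (eventually_left_ge Ts s 0 s); [lra|].
      intros y Hy. destruct (Hall y ltac:(lra)); tauto.
    + apply (lim_le_c' (at_left s) Ts (Ts s) (mu * Ma) LS). apply (eventually_left_le Ts s (mu * Ma) s); [lra|].
      intros y Hy. destruct (Hall y ltac:(lra)); tauto.
Qed.
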